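(* Fix $b\in\mathbb{N}$ and let $S$ be a subset of $\mathbb{N}$. Then \[ \lim_{N\to\infty}\frac{|\{(r,s)\in\mathbb{N}\times\mathbb{N} : 0<r,s\le N,\ \gcd_b(r,s)\in S\}|}{N^2}=\frac{\zeta_S(b+1)}{\zeta(b+1)}, \] where $\zeta_S(b+1)=\sum_{k\in S}k^{-(b+1)}$ and $\zeta$ is the Riemann zeta function.
   Context: For $b\in\mathbb{N}$ and $r,s\in\mathbb{N}$, $\gcd_b(r,s)=\max\{k\in\mathbb{N} : k\mid r \text{ and } k^b\mid s\}$. *)

(* Defs.v *)
From mathcomp Require Import all_boot all_order all_algebra.
From mathcomp Require Import all_classical all_reals all_analysis.
Set Implicit Arguments. Unset Strict Implicit. Unset Printing Implicit Defensive.
Import Order.TTheory GRing.Theory Num.Theory.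
Import numFieldNormedType.Exports.
Local Open Scope ring_scope.
Local Open Scope classical_set_scope.

(* gcd_b(r,s) = max { k : k | r and k^b | s }.  For r > 0 every such k
   satisfies k <= r, so the max over k in [0, r] is the max of the set. *)
Definition gcdb (b r s : nat) : nat :=
  (\max_(k < r.+1 | (k %| r) && (k ^ b %| s)) k)%N.

Definition count_gcdb (b : nat) (S : set nat) (N : nat) : nat :=
  #|[set p : 'I_N.+1 * 'I_N.+1 |
      [&& (0 < p.1)%N, (0 < p.2)%N & gcdb b p.1 p.2 \in S]]|.

Definition zetaS (R : realType) (S : set nat) (n : nat) : R :=
  limn (fun N : nat => (\sum_(1 <= k < N | k \in S) (k%:R : R) ^- n : R)).

Definition zeta (R : realType) (n : nat) : R :=
  limn (fun N : nat => (\sum_(1 <= k < N) (k%:R : R) ^- n : R)).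

(* Main.v *)
Require Import Defs.
From mathcomp Require Import all_boot all_order all_algebra.
From mathcomp Require Import all_classical all_reals all_analysis.
From mathcomp Require Import ring lra.
Import Order.TTheory GRing.Theory Num.Theory.
Import numFieldNormedType.Exports.
Local Open Scope ring_scope.
Local Open Scope classical_set_scope.

Section NatPart.
Local Open Scope nat_scope.


Lemma gcdn_exp k g b : (0 < k)%N -> gcdn (k ^ b) (g ^ b) = gcdn k g ^ b.
Proof.
move=> k0.
have d0 : (0 < gcdn k g)%N by rewrite gcdn_gt0 k0.
set d := gcdn k g in d0 *.
have ek : k = (k %/ d) * d by rewrite divnK // dvdn_gcdl.
have eg : g = (g %/ d) * d by rewrite divnK // dvdn_gcdr.
have cop : coprime (k %/ d) (g %/ d).
  rewrite /coprime; apply/eqP.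
  have : gcdn (k %/ d * d) (g %/ d * d) = d by rewrite -ek -eg.
  rewrite -muln_gcdl => /eqP; rewrite -[X in _ == X](mul1n d) eqn_pmul2r // => /eqP //.
rewrite [in LHS]ek [in LHS]eg !expnMn -muln_gcdl.
by move: (coprimeXr b (coprimeXl b cop)); rewrite /coprime => /eqP ->; rewrite mul1n.
Qed.

Lemma lcmn_exp k g b : (0 < k)%N -> (0 < g)%N -> lcmn (k ^ b) (g ^ b) = lcmn k g ^ b.
Proof.
move=> k0 g0.
have d0 : (0 < gcdn k g ^ b)%N by rewrite expn_gt0 gcdn_gt0 k0.
apply/eqP; rewrite -(eqn_pmul2r d0) -gcdn_exp //. rewrite muln_lcm_gcd. rewrite gcdn_exp // -expnMn -[in X in _ == X]expnMn muln_lcm_gcd //.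
Qed.

Section Gcdb.
Variables (b r s : nat).
Hypothesis r0 : (0 < r)%N.

Lemma gcdb_P : (gcdb b r s %| r) && (gcdb b r s ^ b %| s).
Proof.
rewrite /gcdb.
have P1 : (fun k : 'I_r.+1 => (k %| r) && (k ^ b %| s)) (Ordinal (r0 : (1 < r.+1)%N)).
  by rewrite /= dvd1n exp1n dvd1n.
rewrite (bigop.bigmax_eq_arg (Ordinal (r0 : (1 < r.+1)%N)) P1).
by case: arg_maxnP.
Qed.

Lemma gcdb_max k : (k %| r) -> (k ^ b %| s) -> (k <= gcdb b r s)%N.
Proof.
move=> kr ks.
have kr' : (k < r.+1)%N by rewrite ltnS dvdn_leq.
rewrite /gcdb.
apply: (@bigop.leq_bigmax_cond _ (fun k : 'I_r.+1 => (k %| r) && (k ^ b %| s)) (fun k : 'I_r.+1 => nat_of_ord k) (Ordinal kr')).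
by rewrite /= kr ks.
Qed.

Lemma gcdb_gt0 : (0 < gcdb b r s)%N.
Proof. by apply: (@leq_trans 1) => //; apply: gcdb_max; rewrite ?dvd1n ?exp1n ?dvd1n. Qed.

Lemma gcdb_le : (gcdb b r s <= r)%N.
Proof. by case/andP: gcdb_P => /(dvdn_leq r0). Qed.

Lemma gcdb_dvd k : ((k %| r) && (k ^ b %| s)) = (k %| gcdb b r s).
Proof.
case/andP: gcdb_P => gr gs.
apply/idP/idP.
  case/andP => kr ks.
  have k0 : (0 < k)%N by apply: dvdn_gt0 kr.
  have g0 := gcdb_gt0.
  set g := gcdb b r s in gr gs g0 *.
  have lr : lcmn k g %| r by rewrite dvdn_lcm kr gr.
  have ls : lcmn k g ^ b %| s by rewrite -lcmn_exp // dvdn_lcm ks gs.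
  have le1 : (lcmn k g <= g)%N by apply: gcdb_max.
  have le2 : (g <= lcmn k g)%N by apply: dvdn_leq; [rewrite lcmn_gt0 k0 g0 | apply: dvdn_lcmr].
  have -> : g = lcmn k g by apply/eqP; rewrite eqn_leq le1 le2.
  exact: dvdn_lcml.
move=> kg; rewrite (dvdn_trans kg gr) /=.
exact: dvdn_trans (dvdn_exp2r b kg) gs.
Qed.
End Gcdb.

End NatPart.

Section Mu.
Variable R : realType.

Definition mu (n : nat) : R :=
  if (0 < n)%N && all (fun p => logn p n == 1%N) (primes n)
  then (-1) ^+ size (primes n) else 0.

Lemma mu0 : mu 0 = 0. Proof. by []. Qed.
Lemma mu1 : mu 1 = 1. Proof. by rewrite /mu. Qed.

Lemma mu_norm n : `|mu n| <= 1.
Proof. rewrite /mu; case: ifP => _; last by rewrite normr0. by rewrite normrX normrN1 expr1n. Qed.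

Lemma mu_mulp p m : prime p -> ~~ (p %| m)%N -> (0 < m)%N -> mu (m * p) = - mu m.
Proof.
move=> pp pm m0.
have p0 := prime_gt0 pp.
have mp0 : (0 < m * p)%N by rewrite muln_gt0 m0.
have pe : perm_eq (primes (m * p)) (p :: primes m).
  apply: uniq_perm; first exact: primes_uniq.
    by rewrite /= primes_uniq mem_primes (negbTE pm) !andbF.
  move=> q; rewrite primesM // in_cons orbC; congr (_ || _).
  by rewrite primes_prime // inE.
rewrite /mu (perm_size pe) (eq_all_r (perm_mem pe)) mp0 m0 /=.
have -> : logn p (m * p) = 1%N.
  by rewrite lognM // (@logn_coprime p m) ?prime_coprime // (logn_prime _ pp) eqxx.
have -> : all (fun q => logn q (m * p) == 1%N) (primes m) = all (fun q => logn q m == 1%N) (primes m).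
  apply: eq_in_all => q; rewrite mem_primes => /and3P[qp _ qm].
  rewrite lognM // (logn_prime _ pp).
  have qp' : q != p by apply: contraNneq pm => <-.
  by rewrite (negbTE qp') addn0.
rewrite eqxx /=. case: ifP => _; last by rewrite oppr0.
by rewrite exprS mulN1r.
Qed.

Lemma mu_sq p m : prime p -> (p * p %| m)%N -> mu m = 0.
Proof.
move=> pp ppm; rewrite /mu.
case: (posnP m) => [->|m0] //=.
have pin : p \in primes m by rewrite mem_primes pp m0 (dvdn_trans (dvdn_mulr _ (dvdnn p)) ppm).
have : (2 <= logn p m)%N by rewrite -pfactor_dvdn.
case: allP => [H|] //.
by move/eqP: (H p pin) => ->.
Qed.


Lemma mu_div_sum t : (0 < t)%N -> \sum_(m <- divisors t) mu m = (t == 1)%:R.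
Proof.
move=> t0.
case: (ltngtP t 1) => [|t1|->]; first by rewrite ltnS leqn0 => /eqP Ht; rewrite Ht in t0.
  2: by rewrite /= big_seq1 mu1.
have pp := pdiv_prime t1.
set p := pdiv t in pp.
have pt : (p %| t)%N by apply: pdiv_dvd.
have p0 := prime_gt0 pp.
pose sg (m : nat) := if (p * p %| m)%N then m else if (p %| m)%N then (m %/ p)%N else (m * p)%N.
have Hs : forall m, (m %| t)%N -> [/\ (sg m %| t)%N, sg (sg m) = m & mu (sg m) = - mu m].
  move=> m mt.
  have m0 : (0 < m)%N by apply: dvdn_gt0 mt.
  rewrite /sg; case: ifP => ppm.
    by rewrite ppm (@mu_sq p m pp ppm) oppr0.
  case: ifP => pm.
    have em : (m %/ p * p)%N = m by rewrite divnK.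
    have q0 : (0 < m %/ p)%N by rewrite divn_gt0 // dvdn_leq.
    have npq : ~~ (p %| m %/ p)%N.
      by apply/negP => H; move: ppm; rewrite -em dvdn_pmul2r // H.
    have nppq : ~~ (p * p %| m %/ p)%N.
      by apply/negP => H; move: npq; rewrite (dvdn_trans (dvdn_mull _ (dvdnn p)) H).
    rewrite (negbTE nppq) (negbTE npq) em; split => //.
      by apply: dvdn_trans mt; rewrite -{2}em dvdn_mulr.
    by rewrite -{2}em (@mu_mulp p _ pp npq q0) opprK.
  have npm : ~~ (p %| m)%N by rewrite pm.
  have nppq : ~~ (p * p %| m * p)%N by rewrite dvdn_pmul2r.
  rewrite (negbTE nppq) dvdn_mull // mulnK //; split => //.
    by rewrite Gauss_dvd ?mt ?pt // coprime_sym prime_coprime.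
  by rewrite (@mu_mulp p m pp npm m0).
set s := divisors t.
have pe : perm_eq s (map sg s).
  apply: uniq_perm; first exact: divisors_uniq.
    rewrite map_inj_in_uniq; first exact: divisors_uniq.
    move=> x y; rewrite -!dvdn_divisors // => xt yt Hxy.
    by case: (Hs x xt) => _ <- _; case: (Hs y yt) => _ <- _; rewrite Hxy.
  move=> x; apply/idP/idP.
    rewrite -dvdn_divisors // => xt.
    case: (Hs x xt) => sxt ssx _.
    by rewrite -ssx map_f // -dvdn_divisors.
  case/mapP => y; rewrite -!dvdn_divisors // => yt ->.
  by case: (Hs y yt).
have : \sum_(m <- s) mu m = - \sum_(m <- s) mu m.
  rewrite {1}(perm_big _ pe) big_map -sumrN.
  apply: eq_big_seq => x; rewrite -dvdn_divisors // => xt.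
  by case: (Hs x xt).
move=> H /=; rewrite mulr0n; lra.
Qed.
End Mu.

Section Dom.
Variable R : realType.

Definition hh (k : nat) : R := 4 / (k.+1%:R ^+ 2).

Lemma hh_ge0 k : 0 <= hh k.
Proof. by rewrite /hh divr_ge0 // exprn_ge0. Qed.

Lemma hh_tele k : hh k <= 8 / k.+1%:R - 8 / k.+2%:R.
Proof.
rewrite /hh -subr_ge0.
have x0 : (0 : R) < k.+1%:R by rewrite ltr0n.
have -> : (k.+2%:R : R) = k.+1%:R + 1 by rewrite -natr1.
set x := (k.+1%:R : R) in x0 *.
have x1 : 1 <= x by rewrite /x ler1n.
have -> : 8 / x - 8 / (x + 1) - 4 / x ^+ 2 = 4 * (x - 1) / (x ^+ 2 * (x + 1)).
  field. by apply/andP; split; rewrite lt0r_neq0 // ?ltr_wpDr.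
apply: divr_ge0; first by apply: mulr_ge0 => //; rewrite subr_ge0.
by apply: mulr_ge0; [apply: exprn_ge0; apply: ltW | apply: addr_ge0 => //; apply: ltW].
Qed.

Lemma hh_tail K n : (K <= n)%N -> \sum_(K <= k < n) hh k <= 8 / K.+1%:R.
Proof.
move=> Kn.
apply: (@le_trans _ _ (\sum_(K <= k < n) ((fun j : nat => - (8 / j.+1%:R)) k.+1 - (fun j : nat => - (8 / j.+1%:R)) k))).
  apply: ler_sum => k _ /=. rewrite opprK addrC. exact: hh_tele.
rewrite telescope_sumr //= opprK gerDr oppr_le0.
by rewrite divr_ge0.
Qed.

Lemma series_hh_le n : series hh n <= 8.
Proof. by rewrite /series /= -[X in _ <= X]divr1 -[1 in X in _ <= X]/(1%:R); apply: hh_tail. Qed.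

Lemma cvg_series_hh : cvgn (series hh).
Proof.
apply: nondecreasing_is_cvgn.
  by apply: (@nondecreasing_series _ _ xpredT 0) => k _ _; apply: hh_ge0.
by exists 8 => _ [n _ <-]; apply: series_hh_le.
Qed.


Lemma cvg_fin_sum (f : nat -> nat -> R) (g : nat -> R) K :
  (forall k, (fun N => f N k) @ \oo --> g k) ->
  (fun N => \sum_(k < K) f N k) @ \oo --> \sum_(k < K) g k.
Proof.
move=> fg; elim: K => [|K IH].
  under eq_cvg do rewrite big_ord0. rewrite big_ord0. exact: cvg_cst.
under eq_cvg do rewrite big_ord_recr /=. rewrite big_ord_recr /=.
exact: cvgD.
Qed.

Lemma dom_cvg (f : nat -> nat -> R) (g : nat -> R) :
  (forall k, (fun N => f N k) @ \oo --> g k) ->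
  (forall N k, `|f N k| <= hh k) ->
  (fun N => \sum_(k < N.+1) f N k) @ \oo --> limn (series g).
Proof.
move=> fg fh.
have gh k : `|g k| <= hh k.
  apply: (ler_cvg_to (cvg_norm (fg k)) (cvg_cst (hh k))).
  by exists 0%N => // N _; apply: fh.
have cg : cvgn (series g).
  apply: normed_cvg.
  apply: (@series_le_cvg _ (fun n => `|g n|) hh) => //; last exact: cvg_series_hh.
  exact: hh_ge0.
have tailg K n : (K <= n)%N -> `|series g n - series g K| <= 8 / K.+1%:R.
  move=> Kn; rewrite sub_series_geq //.
  apply: le_trans (ler_norm_sum _ _ _) _.
  apply: le_trans (hh_tail _ _ Kn).
  by apply: ler_sum => k _; apply: gh.
have tailG K : `|limn (series g) - series g K| <= 8 / K.+1%:R.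
  have c1 : (fun n => `|series g n - series g K|) @ \oo --> `|limn (series g) - series g K|.
    apply: cvg_norm. apply: cvgB => //. exact: cvg_cst.
  apply: (ler_cvg_to c1 (cvg_cst _)).
  by exists K => // n /= Kn; apply: tailg.
apply/cvgrPdist_le => e e0.
have e24 : 0 < e / 24 by rewrite divr_gt0.
have [K _ HK] := (cvgrPdist_le _ _).1 (@cvg_harmonic R) (e / 24) e24.
have HK' : 8 / K.+1%:R <= e / 3.
  have := HK K (leqnn K). rewrite /= sub0r normrN ger0_norm // => hk.
  have -> : e / 3 = 8 * (e / 24) by field.
  by rewrite ler_pM2l.
have e3 : 0 < e / 3 by rewrite divr_gt0.
have [M _ HM] := (cvgrPdist_le _ _).1 (@cvg_fin_sum f g K fg) (e / 3) e3.
exists (maxn K M) => // N /=; rewrite geq_max => /andP[KN MN].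
have HA := HM N MN.
rewrite -(big_mkord xpredT (fun k => f N k)) (@big_cat_nat _ _ _ K) //=; last by apply: leqW.
rewrite big_mkord.
have HB : `|\sum_(K <= k < N.+1) f N k| <= 8 / K.+1%:R.
  apply: le_trans (ler_norm_sum _ _ _) _.
  apply: le_trans (hh_tail _ _ (leqW KN)).
  by apply: ler_sum => k _; apply: fh.
have HG := tailG K.
have -> : limn (series g) - (\sum_(k < K) f N k + \sum_(K <= k < N.+1) f N k)
  = (limn (series g) - series g K) + (\sum_(k < K) g k - \sum_(k < K) f N k)
    - \sum_(K <= k < N.+1) f N k.
  by rewrite seriesEord /=; ring.
apply: le_trans (ler_normB _ _) _.
apply: le_trans (lerD (ler_normD _ _) (lexx _)) _.
have -> : e = e / 3 + e / 3 + e / 3 by field.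
by apply: lerD; [apply: lerD|]; [apply: le_trans HK' | exact: HA | apply: le_trans HK'].

Qed.
End Dom.

Lemma floor_aux (R : realType) (q x y : R) : 0 < y -> 1 <= x -> q * y <= x ->
  x < (q + 1) * y -> y^-1 - 2 * (x + 1)^-1 <= q / x <= y^-1.
Proof.
move=> ha x1 e1 e2.
have hN : 0 < x by lra.
apply/andP; split.
+ rewrite -subr_ge0.
  have -> : q / x - (y^-1 - 2 * (x + 1)^-1) = ((q + 1) * y - x) / (x * y) + (x - 1) / (x * (x + 1)).
    field. apply/and3P; split; apply: lt0r_neq0; lra.
  apply: addr_ge0; apply: divr_ge0; try lra; apply: mulr_ge0; lra.
+ rewrite ler_pdivrMr // ler_pdivlMl //; lra.
Qed.

Lemma floor_cvg (R : realType) a : (0 < a)%N ->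
  (fun N => (N %/ a)%:R / N%:R : R) @ \oo --> (a%:R : R)^-1.
Proof.
move=> a0.
have ha : (0 : R) < a%:R by rewrite ltr0n.
apply: (@squeeze_cvgr _ _ _ _ (fun N => (a%:R : R)^-1 - 2 * harmonic N) (fun _ => (a%:R : R)^-1)).
- exists 1%N => // N /= N1.
  have e1 : ((N %/ a)%:R * a%:R <= N%:R :> R) by rewrite -natrM ler_nat leq_trunc_div.
  have e2 : (N%:R < ((N %/ a)%:R + 1) * a%:R :> R) by rewrite -[1 in X in _ < X]/(1%:R) -natrD -natrM ltr_nat addn1 ltn_ceil.
  rewrite /harmonic /= -natr1.
  have N1' : (1 <= N%:R :> R) by rewrite ler1n.
  have H := @floor_aux R _ _ _ ha N1' e1 e2. rewrite natr1 in H. exact: H.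
- have h2 : (fun N => 2 * harmonic N) @ \oo --> (2 : R) * 0.
    by apply: cvgMl_tmp; exact: cvg_harmonic.
  have := cvgB (cvg_cst ((a%:R : R)^-1)) h2.
  rewrite mulr0 subr0 => H; apply: H; exact: _.
- exact: cvg_cst.
Qed.

Lemma count_mult N d : (0 < d)%N ->
  (\sum_(r < N.+1) ((0 < r) && (d %| r))%N : nat)%N = (N %/ d)%N.
Proof.
move=> d0; elim: N => [|N IH]; first by rewrite big_ord1 div0n.
by rewrite big_ord_recr /= IH (divnS _ d0) addnC.
Qed.

Section Count.
Variables (R : realType) (b : nat).
Hypothesis b0 : (0 < b)%N.

Definition Acnt (N k : nat) : R :=
  \sum_(r < N.+1) \sum_(s < N.+1) ((0 < r)%N && (0 < s)%N && (gcdb b r s == k))%:R.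
Definition Dd (N d : nat) : R := ((N %/ d) * (N %/ d ^ b))%:R.

Lemma Dd_sum N d : (0 < d)%N ->
  Dd N d = \sum_(r < N.+1) \sum_(s < N.+1) ((0 < r)%N && (0 < s)%N && (d %| gcdb b r s)%N)%:R.
Proof.
move=> d0.
have db0 : (0 < d ^ b)%N by rewrite expn_gt0 d0.
rewrite /Dd -(@count_mult N _ d0) -(@count_mult N _ db0) natrM !natr_sum big_distrl /=.
apply: eq_bigr => r _; rewrite big_distrr /=; apply: eq_bigr => s _.
rewrite -natrM mulnb; congr (_ %:R).
case: (posnP r) => [->|r0] //=.
by rewrite -gcdb_dvd //; case: (0 < s)%N; case: (d %| r)%N.
Qed.


Lemma sum_div_ord (F : nat -> R) t N : (0 < t)%N -> (t <= N)%N ->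
  \sum_(m < N.+1 | (m %| t)%N) F m = \sum_(m <- divisors t) F m.
Proof.
move=> t0 tN.
rewrite -(big_mkord (fun m => (m %| t)%N)) -big_filter.
apply: perm_big; apply: uniq_perm.
- by apply: filter_uniq; apply: iota_uniq.
- exact: divisors_uniq.
move=> m; rewrite mem_filter mem_iota -dvdn_divisors // add0n.
case mt: (m %| t)%N => //=.
by rewrite ltnS (leq_trans (dvdn_leq t0 mt) tN).
Qed.

Lemma mobius_pt k g N : (0 < k)%N -> (0 < g)%N -> (g <= N)%N ->
  \sum_(m < N.+1) mu R m * ((k * m %| g)%N)%:R = ((g == k)%N)%:R.
Proof.
move=> k0 g0 gN.
case kg: (k %| g)%N; last first.
  rewrite big1; last first.
    move=> m _; case: (boolP (k * m %| g)%N) => H; last by rewrite mulr0.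
    by move: kg; rewrite (dvdn_trans (dvdn_mulr _ (dvdnn k)) H).
  case: eqP => // E; by move: kg; rewrite E dvdnn.
have eg : g = (k * (g %/ k))%N by rewrite mulnC divnK.
have t0 : (0 < g %/ k)%N by rewrite divn_gt0 // dvdn_leq.
have tN : (g %/ k <= N)%N.
  apply: leq_trans gN; rewrite {2}eg; exact: leq_pmull.
set t := (g %/ k)%N in eg t0 tN *.
rewrite eg.
under eq_bigr => m _ do rewrite dvdn_pmul2l // mulr_natr mulrb.
rewrite -big_mkcond /= -[X in _ == X](muln1 k) eqn_pmul2l //.
by rewrite sum_div_ord // mu_div_sum.
Qed.

Lemma Acnt_mobius N k : (0 < k)%N ->
  Acnt N k = \sum_(m < N.+1) mu R m * Dd N (k * m).
Proof.
move=> k0.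
have E : forall m : 'I_N.+1, mu R m * Dd N (k * m) =
   \sum_(r < N.+1) \sum_(s < N.+1) mu R m * ((0 < r)%N && (0 < s)%N && (k * m %| gcdb b r s)%N)%:R.
  move=> m; case: (posnP m) => [->|m0]; first by rewrite mu0 mul0r big1 // => r _; rewrite big1 // => s _; rewrite mul0r.
  rewrite Dd_sum ?muln_gt0 ?k0 // mulr_sumr; apply: eq_bigr => r _; rewrite mulr_sumr //.
rewrite (eq_bigr _ (fun m _ => E m)) exchange_big /=.
apply: eq_bigr => r _; rewrite exchange_big /=; apply: eq_bigr => s _.
case: (posnP r) => [->|r0]; first by rewrite /= big1 // => m _; rewrite mulr0.
case: (posnP s) => [->|s0]; first by rewrite andbF /= big1 // => m _; rewrite mulr0.
rewrite /= mobius_pt //; first exact: gcdb_gt0.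
by apply: leq_trans (gcdb_le b r s r0) _; rewrite -ltnS.
Qed.

Lemma Acnt0 N : Acnt N 0 = 0.
Proof.
rewrite /Acnt big1 // => r _; rewrite big1 // => s _.
case: (posnP r) => [->|r0] //=.
by rewrite gtn_eqF ?andbF // gcdb_gt0.
Qed.

Lemma Acnt_ge0 N k : 0 <= Acnt N k.
Proof. by rewrite /Acnt; apply: sumr_ge0 => r _; apply: sumr_ge0 => s _; apply: ler0n. Qed.

Lemma Acnt_le_Dd N k : (0 < k)%N -> Acnt N k <= Dd N k.
Proof.
move=> k0; rewrite Dd_sum //; apply: ler_sum => r _; apply: ler_sum => s _.
rewrite ler_nat; case: eqP => [->|]; first by rewrite dvdnn.
by rewrite andbF.
Qed.


Lemma count_sum S N : count_gcdb b S N =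
  (\sum_(r < N.+1) \sum_(s < N.+1) [&& (0 < r)%N, (0 < s)%N & gcdb b r s \in S])%N.
Proof.
rewrite /count_gcdb -sum1_card big_mkcond /=.
rewrite pair_big /=; apply: eq_bigr => -[r s] _ /=.
rewrite (_ : (_ \in _) = [&& (0 < r)%N, (0 < s)%N & gcdb b r s \in S]); first by case: ifP.
by apply/idP/idP => [/set_mem|/mem_set].
Qed.

Lemma count_eq S N : (count_gcdb b S N)%:R = \sum_(k < N.+1) ((k : nat) \in S)%:R * Acnt N k.
Proof.
rewrite count_sum natr_sum.
under [RHS]eq_bigr => k _ do rewrite /Acnt mulr_sumr.
rewrite exchange_big /=; apply: eq_bigr => r _.
under [RHS]eq_bigr => k _ do rewrite mulr_sumr.
rewrite natr_sum exchange_big /=; apply: eq_bigr => s _.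
case: (posnP r) => [->|r0]; first by rewrite /= big1 // => m _; rewrite mulr0.
case: (posnP s) => [->|s0]; first by rewrite andbF /= big1 // => m _; rewrite mulr0.
have glt : (gcdb b r s < N.+1)%N.
  by rewrite ltnS; apply: leq_trans (gcdb_le b r s r0) _; rewrite -ltnS.
rewrite (bigD1 (Ordinal glt)) //= eqxx mulr1 big1 ?addr0 //.
move=> k /negPf kg; rewrite (_ : (gcdb b r s == k) = false) ?mulr0 //.
apply/negbTE; apply: contraFN kg => /eqP E; apply/eqP/val_inj => /=; by rewrite E.
Qed.


Lemma floor_le N a : (0 < a)%N -> (0 : R) <= (N %/ a)%:R / N%:R <= (a%:R : R)^-1.
Proof.
move=> a0; have ha : (0 : R) < a%:R by rewrite ltr0n.
apply/andP; split; first by rewrite divr_ge0.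
case: (posnP N) => [->|N0]; first by rewrite div0n mul0r invr_ge0 ler0n.
have hN : (0 : R) < N%:R by rewrite ltr0n.
have e1 : ((N %/ a)%:R * a%:R <= N%:R :> R) by rewrite -natrM ler_nat leq_trunc_div.
rewrite ler_pdivrMr // ler_pdivlMl //; lra.
Qed.

Lemma inv_nat_le a c : (0 < a)%N -> (a <= c)%N -> (c%:R : R)^-1 <= (a%:R : R)^-1.
Proof.
move=> a0 ac; rewrite lef_pV2 ?ler_nat // posrE ltr0n //.
exact: leq_trans ac.
Qed.

Lemma inv_sq_hh m : (0 < m)%N -> ((m ^ 2)%:R : R)^-1 <= hh R m.
Proof.
move=> m0; rewrite /hh natrX -subr_ge0.
have x0 : (0 : R) < m%:R by rewrite ltr0n.
have x1 : (1 : R) <= m%:R by rewrite ler1n.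
rewrite -[m.+1%:R]natr1.
set x := (m%:R : R) in x0 x1 *.
have -> : 4 / (x + 1) ^+ 2 - (x ^+ 2)^-1 = (x - 1) * (3 * x + 1) / (x ^+ 2 * (x + 1) ^+ 2).
  field. by apply/andP; split; apply: lt0r_neq0; lra.
apply: divr_ge0; first by apply: mulr_ge0; lra.
by apply: mulr_ge0; apply: exprn_ge0; lra.
Qed.

Lemma Dd_split N d : Dd N d / N%:R ^+ 2 = ((N %/ d)%:R / N%:R) * ((N %/ d ^ b)%:R / N%:R).
Proof. by rewrite /Dd natrM expr2 invfM mulrACA. Qed.

Lemma Dd_bound N d : (0 < d)%N -> 0 <= Dd N d / N%:R ^+ 2 <= ((d ^ 2)%:R)^-1.
Proof.
move=> d0; have db0 : (0 < d ^ b)%N by rewrite expn_gt0 d0.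
rewrite Dd_split.
case/andP: (@floor_le N d d0) => h1 h2; case/andP: (@floor_le N _ db0) => h3 h4.
apply/andP; split; first exact: mulr_ge0.
rewrite natrX expr2 invfM; apply: ler_pM => //.
apply: le_trans h4 _; apply: inv_nat_le => //.
by rewrite -{1}(expn1 d) leq_pexp2l.
Qed.

Lemma Dd_lim d : (0 < d)%N -> (fun N => Dd N d / N%:R ^+ 2) @ \oo --> ((d ^ b.+1)%:R : R)^-1.
Proof.
move=> d0; have db0 : (0 < d ^ b)%N by rewrite expn_gt0 d0.
have -> : (fun N => Dd N d / N%:R ^+ 2) = (fun N => (N %/ d)%:R / N%:R) \* (fun N => (N %/ d ^ b)%:R / N%:R).
  by apply/funext => N; rewrite Dd_split.
rewrite expnS natrM invfM.
by apply: cvgM; apply: floor_cvg.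
Qed.


Lemma lerT {x y z : R} : y <= z -> x <= y -> x <= z.
Proof. by move=> h1 h2; apply: le_trans h2 h1. Qed.

Lemma cvg_dom_series (g : nat -> R) : (forall k, `|g k| <= hh R k) -> cvgn (series g).
Proof.
move=> gh; apply: normed_cvg.
apply: (@series_le_cvg _ (fun n => `|g n|) (hh R)) => //; last exact: cvg_series_hh.
exact: hh_ge0.
Qed.

Definition g0 (m : nat) : R := mu R m * ((m ^ b.+1)%:R)^-1.
Definition c0 : R := limn (series g0).

Lemma inv_pow_hh m : ((m ^ b.+1)%:R : R)^-1 <= hh R m.
Proof.
case: (posnP m) => [->|m0]; first by rewrite exp0n // invr0 hh_ge0.
apply: (lerT (inv_sq_hh _ m0)); apply: inv_nat_le; first by rewrite expn_gt0 m0.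
by apply: leq_pexp2l.
Qed.

Lemma g0_bound m : `|g0 m| <= hh R m.
Proof.
rewrite /g0 normrM [X in _ * X]ger0_norm ?invr_ge0 ?ler0n //.
apply: (lerT (inv_pow_hh m)).
by rewrite -[X in _ <= X]mul1r ler_wpM2r ?invr_ge0 ?ler0n // mu_norm.
Qed.

Lemma Acnt_lim k : (0 < k)%N ->
  (fun N => Acnt N k / N%:R ^+ 2) @ \oo --> ((k ^ b.+1)%:R)^-1 * c0.
Proof.
move=> k0.
have -> : (fun N => Acnt N k / N%:R ^+ 2) =
    (fun N => \sum_(m < N.+1) (mu R m * (Dd N (k * m) / N%:R ^+ 2))).
  apply/funext => N; rewrite Acnt_mobius // mulr_suml.
  by apply: eq_bigr => m _; rewrite mulrA.
have -> : ((k ^ b.+1)%:R)^-1 * c0 = limn (series (fun m => mu R m * (((k * m) ^ b.+1)%:R)^-1)).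
  rewrite /c0; change (((k ^ b.+1)%:R^-1 : R) *: limn (series g0) = limn (series (fun m => mu R m * (((k * m) ^ b.+1)%:R)^-1))).
  rewrite -lim_seriesZ; last by apply: cvg_dom_series; apply: g0_bound.
  congr (limn (series _)); apply/funext => m /=.
  by rewrite /g0 expnMn natrM invfM mulrCA.
apply: (@dom_cvg R (fun N m => mu R m * (Dd N (k * m) / N%:R ^+ 2)) (fun m => mu R m * (((k * m) ^ b.+1)%:R)^-1)).
- move=> m; case: (posnP m) => [->|m0].
    rewrite mu0 mul0r; under eq_cvg do rewrite mul0r. exact: cvg_cst.
  apply: cvgMl_tmp; apply: Dd_lim; by rewrite muln_gt0 k0.
- move=> N m; case: (posnP m) => [->|m0]; first by rewrite mu0 mul0r normr0 hh_ge0.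
  have km0 : (0 < k * m)%N by rewrite muln_gt0 k0.
  case/andP: (@Dd_bound N _ km0) => h1 h2.
  rewrite normrM (ger0_norm h1).
  apply: (lerT (inv_sq_hh _ m0)).
  rewrite -[X in _ <= X]mul1r; apply: ler_pM => //; first exact: mu_norm.
  apply: le_trans h2 _; apply: inv_nat_le; first by rewrite expn_gt0 m0.
  by rewrite leq_exp2r // leq_pmull.
Qed.


Definition G1 (S : set nat) (k : nat) : R := (k \in S)%:R * ((k ^ b.+1)%:R)^-1.

Lemma G1_bound S k : `|G1 S k| <= hh R k.
Proof.
rewrite /G1 normrM [X in _ * X]ger0_norm ?invr_ge0 ?ler0n //.
apply: (lerT (inv_pow_hh k)).
rewrite -[X in _ <= X]mul1r ler_wpM2r ?invr_ge0 ?ler0n //.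
by case: (k \in S); rewrite ?normr1 ?normr0.
Qed.

Lemma main_lim S : (fun N => (count_gcdb b S N)%:R / N%:R ^+ 2) @ \oo -->
  c0 * limn (series (G1 S)).
Proof.
have -> : (fun N => (count_gcdb b S N)%:R / N%:R ^+ 2) =
    (fun N => \sum_(k < N.+1) (((k : nat) \in S)%:R * (Acnt N k / N%:R ^+ 2))).
  apply/funext => N; rewrite count_eq mulr_suml.
  by apply: eq_bigr => k _; rewrite mulrA.
have -> : c0 * limn (series (G1 S)) =
    limn (series (fun k => (k \in S)%:R * (((k ^ b.+1)%:R)^-1 * c0))).
  change (c0 *: limn (series (G1 S)) = limn (series (fun k => (k \in S)%:R * (((k ^ b.+1)%:R)^-1 * c0)))).
  rewrite -lim_seriesZ; last by apply: cvg_dom_series; apply: G1_bound.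
  congr (limn (series _)); apply/funext => k /=.
  rewrite /G1; change (c0 * ((k \in S)%:R / (k ^ b.+1)%:R) = (k \in S)%:R * ((k ^ b.+1)%:R^-1 * c0)); ring.
apply: (@dom_cvg R (fun N k => (k \in S)%:R * (Acnt N k / N%:R ^+ 2))
                   (fun k => (k \in S)%:R * (((k ^ b.+1)%:R)^-1 * c0))).
- move=> k; case: (posnP k) => [->|k0].
    rewrite exp0n // invr0 mul0r mulr0.
    under eq_cvg do rewrite Acnt0 mul0r mulr0.
    exact: cvg_cst.
  apply: cvgMl_tmp; exact: Acnt_lim.
- move=> N k; case: (posnP k) => [->|k0]; first by rewrite Acnt0 mul0r mulr0 normr0 hh_ge0.
  case/andP: (@Dd_bound N _ k0) => h1 h2.
  have a0 : 0 <= Acnt N k / N%:R ^+ 2 by rewrite divr_ge0 ?Acnt_ge0 ?exprn_ge0.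
  have a1 : Acnt N k / N%:R ^+ 2 <= Dd N k / N%:R ^+ 2.
    by rewrite ler_wpM2r ?invr_ge0 ?exprn_ge0 // Acnt_le_Dd.
  rewrite normrM (ger0_norm a0).
  apply: (lerT (inv_sq_hh _ k0)).
  rewrite -[X in _ <= X]mul1r; apply: ler_pM => //.
    by case: (k \in S); rewrite ?normr1 ?normr0.
  exact: le_trans a1 h2.
Qed.

Lemma count_setT N : (count_gcdb b setT N)%:R = (N * N)%:R :> R.
Proof.
have -> : (N * N)%N = (N %/ 1 * (N %/ 1 ^ b))%N by rewrite exp1n !divn1.
rewrite -[RHS]/(Dd N 1) Dd_sum // count_sum natr_sum.
apply: eq_bigr => r _; rewrite natr_sum; apply: eq_bigr => s _.
have -> : (gcdb b r s \in [set: nat]) = true by apply/idP; apply: classical_sets.in_setT.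
by rewrite dvd1n !andbT.
Qed.

Lemma lim_one : (fun N => (count_gcdb b setT N)%:R / N%:R ^+ 2) @ \oo --> (1 : R).
Proof.
apply/cvgrPdist_le => e e0.
exists 1%N => // N /= N1.
rewrite count_setT natrM -expr2 divff ?subrr ?normr0 ?ltW //.
by rewrite expf_neq0 // pnatr_eq0 -lt0n.
Qed.

End Count.

Lemma zetaS_G1 (R : realType) b S : zetaS R S b.+1 = limn (series (G1 R b S)).
Proof.
rewrite /zetaS; congr (limn _); apply/funext => N; rewrite /series /=.
case: N => [|N]; first by rewrite !big_geq.
rewrite big_ltn // /G1 exp0n // invr0 mulr0 add0r big_mkcond /=.
apply: eq_bigr => k _; rewrite natrX.
by case: (k \in S); rewrite ?mul1r ?mul0r.
Qed.

Lemma zeta_setT (R : realType) n : zeta R n = zetaS R setT n.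
Proof.
rewrite /zeta /zetaS; congr (limn _); apply/funext => N.
by apply: eq_bigl => k; rewrite classical_sets.in_setT.
Qed.

Theorem mainTheorem5 (R : realType) (b : nat) (S : set nat) :
  (0 < b)%N ->
  (fun N : nat => ((count_gcdb b S N)%:R / (N%:R ^+ 2) : R)) @ \oo
    --> zetaS R S b.+1 / zeta R b.+1.
Proof.
move=> b0.
have L := @main_lim R b b0 S.
have L1 := @main_lim R b b0 setT.
have U : (1 : R) = c0 R b * zeta R b.+1.
  rewrite zeta_setT zetaS_G1.
  by rewrite -(cvg_lim _ (@lim_one R b)) // (cvg_lim _ L1).
have z0 : zeta R b.+1 != 0.
  by apply/eqP => z0; move: U; rewrite z0 mulr0 => /eqP; rewrite oner_eq0.
have -> : zetaS R S b.+1 / zeta R b.+1 = c0 R b * limn (series (G1 R b S)).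
  rewrite -zetaS_G1 mulrC; congr (_ * _).
  by apply: (mulIf z0); rewrite mulVf // -U.
exact: L.
Qed.
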